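(* If $p$ is a prime number, then $J_{p-1}=2$, i.e. the only vectors $(\delta_0,\ldots,\delta_{p-1})\in\{-1,1\}^{p}$ with $\sum_{i=0}^{p-1}\delta_i\binom{p-1}{i}=0$ are $\delta_i=(-1)^i$ for all $i$ and $\delta_i=-(-1)^i$ for all $i$.
   Context: $J_n$ denotes the number of vectors $(\delta_0,\ldots,\delta_n)\in\{-1,1\}^{n+1}$ with $\sum_{i=0}^n\delta_i\binom{n}{i}=0$. *)

(* Defs.v *)
From mathcomp Require Import all_boot all_order all_algebra.
Set Implicit Arguments. Unset Strict Implicit. Unset Printing Implicit Defensive.
Import GRing.Theory Num.Theory.
Local Open Scope ring_scope.

(* A sign vector (delta_0,...,delta_n) in {-1,1}^(n+1) is encoded by
   b : {ffun 'I_(n.+1) -> bool}, with delta_i = (-1)^(b i) (true <-> -1). *)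
Definition sgn_of (b : bool) : int := (-1) ^+ b.

Definition Jset (n : nat) : {set {ffun 'I_n.+1 -> bool}} :=
  [set b : {ffun 'I_n.+1 -> bool} | \sum_(i < n.+1) sgn_of (b i) * ('C(n, i))%:Z == 0].

Definition J (n : nat) : nat := #|Jset n|.

(* Main.v *)
Require Import Defs.
From mathcomp Require Import all_boot all_order all_algebra.
From mathcomp Require Import ring lra zify.
Import GRing.Theory Num.Theory.
Local Open Scope ring_scope.

Lemma binz (n i : nat) : prime n.+1 -> (i <= n)%N ->
  (n.+1%:Z %| 'C(n, i)%:Z - (-1) ^+ i)%Z.
Proof.
move=> hp; elim: i => [|i IH] hi; first by rewrite bin0 expr0 subrr dvdz0.
have e : 'C(n, i.+1)%:Z - (-1) ^+ i.+1
   = 'C(n.+1, i.+1)%:Z - ('C(n, i)%:Z - (-1) ^+ i).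
  by rewrite binS PoszD exprS; ring.
rewrite e rpredB ?IH ?(ltnW hi) //.
by rewrite dvdzE /=; apply: prime_dvd_bin.
Qed.

Lemma sgn_cases (s : int) (i : nat) : s = (-1) ^+ i -> s = 1 \/ s = -1.
Proof. by move=> ->; rewrite -signr_odd; case: (odd i); [right|left]. Qed.

Lemma pm_eq (d s : int) : (d = 1 \/ d = -1) -> (s = 1 \/ s = -1) ->
  (d * s = 1 -> d = s) /\ (d * s = -1 -> d = - s).
Proof. by case=> ->; case=> ->. Qed.

Lemma main_odd (n : nat) (hp : prime n.+1) (hn : n.+1 != 2%N)
  (delta : 'I_n.+1 -> int) :
  (forall i, delta i = 1 \/ delta i = -1) ->
  \sum_(i < n.+1) delta i * ('C(n, i))%:Z = 0 ->
  (forall i : 'I_n.+1, delta i = (-1) ^+ i) \/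
  (forall i : 'I_n.+1, delta i = - (-1) ^+ i).
Proof.
move=> hd hs.
pose e i := delta i * (-1) ^+ (nat_of_ord i).
have he : forall i, e i = 1 \/ e i = -1.
  move=> i; rewrite /e; case: (hd i) => ->;
  case: (@sgn_cases _ (nat_of_ord i) erefl) => ->; lra.
set T := \sum_(i < n.+1) e i.
have hT : (n.+1%:Z %| T)%Z.
  have -> : T = \sum_(i < n.+1) delta i * ('C(n, i))%:Z
     - \sum_(i < n.+1) delta i * ('C(n, i)%:Z - (-1) ^+ (nat_of_ord i)).
    rewrite -sumrB; apply: eq_bigr => i _; rewrite /e; ring.
  rewrite hs sub0r rpredN; apply: rpred_sum => i _.
  by apply: dvdz_mull; apply: binz => //; rewrite -ltnS.
have hsum1 : \sum_(i < n.+1) (1 : int) = n.+1%:Z by rewrite sumr_const card_ord natz.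
have h2 : (2 %| T - n.+1%:Z)%Z.
  rewrite -hsum1 -sumrB; apply: rpred_sum => i _.
  by case: (he i) => ->.
have hA : 0 <= \sum_(i < n.+1) (1 - e i) by apply: sumr_ge0 => i _; case: (he i) => ->.
have hB : 0 <= \sum_(i < n.+1) (1 + e i) by apply: sumr_ge0 => i _; case: (he i) => ->.
have hA' : \sum_(i < n.+1) (1 - e i) = n.+1%:Z - T by rewrite sumrB hsum1.
have hB' : \sum_(i < n.+1) (1 + e i) = n.+1%:Z + T by rewrite big_split /= hsum1.
have hodd : odd n.+1 by case: (even_prime hp) => // h; rewrite h in hn.
case/dvdzP: hT => q hq.
case/dvdzP: h2 => r hr.
have : q = 1 \/ q = -1.
  move: hA hB hodd; rewrite hA' hB' hq => hA hB hodd.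
  have : ~~ (2 %| n.+1)%N by rewrite dvdn2 hodd.
  move=> hnd.
  have hr' : q * n.+1%:Z - n.+1%:Z = r * 2 by rewrite -hq.
  nia.
case=> hq1.
- left => i.
  have hA0 : \sum_(i < n.+1) (1 - e i) = 0 by rewrite hA' hq hq1; ring.
  have := psumr_eq0P (fun j _ => _ ) hA0 (i := i) isT.
  have [h1 _] := @pm_eq _ _ (hd i) (@sgn_cases _ (nat_of_ord i) erefl).
  move=> h0; apply: h1; apply/eqP.
  rewrite -subr_eq0 -opprB oppr_eq0.
  by apply/eqP; apply: h0 => j; case: (he j) => ->.
- right => i.
  have hB0 : \sum_(i < n.+1) (1 + e i) = 0 by rewrite hB' hq hq1; ring.
  have := psumr_eq0P (fun j _ => _ ) hB0 (i := i) isT.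
  have [_ h1] := @pm_eq _ _ (hd i) (@sgn_cases _ (nat_of_ord i) erefl).
  move=> h0; apply: h1; apply/eqP.
  rewrite -subr_eq0 opprK addrC.
  by apply/eqP; apply: h0 => j; case: (he j) => ->.
Qed.

Lemma main (n : nat) (hp : prime n.+1)
  (delta : 'I_n.+1 -> int) :
  (forall i, delta i = 1 \/ delta i = -1) ->
  \sum_(i < n.+1) delta i * ('C(n, i))%:Z = 0 ->
  (forall i : 'I_n.+1, delta i = (-1) ^+ i) \/
  (forall i : 'I_n.+1, delta i = - (-1) ^+ i).
Proof.
case: (eqVneq n.+1 2%N) => hn; last exact: main_odd.
case: n hn hp delta => // -[|//] _ hp delta hd hs.
rewrite !big_ord_recl big_ord0 /= in hs.
have hi2 : forall i : 'I_2, i = ord0 \/ i = lift ord0 ord0.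
  by case=> [[|[|k]] hi] //; [left|right]; apply: val_inj.
rewrite bin0 /bump /= bin1 addr0 !mulr1 in hs.
move: hs; case: (hd ord0) => h0; case: (hd (lift ord0 ord0)) => h1;
  rewrite h0 h1 => hs; try (exfalso; lia).
- left => i; case: (hi2 i) => ->; rewrite ?h0 ?h1 /= ?expr0 ?expr1 //.
- right => i; case: (hi2 i) => ->; rewrite ?h0 ?h1 /= ?expr0 ?expr1 ?opprK //.
Qed.

Lemma alt_sum n : (0 < n)%N -> \sum_(i < n.+1) (-1) ^+ (nat_of_ord i) * ('C(n, i))%:Z = 0.
Proof.
move=> hn.
have := exprDn (1 : int) (-1) n.
rewrite addrN expr0n eqn0Ngt hn /= => h; rewrite [RHS]h.
by apply: eq_bigr => i _; rewrite expr1n mul1r -natz mulr_natr.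
Qed.

Lemma Jset_eq n : prime n.+1 ->
  Jset n = [set [ffun i : 'I_n.+1 => odd i]; [ffun i : 'I_n.+1 => ~~ odd i]].
Proof.
move=> hp; have hn : (0 < n)%N by have := prime_gt1 hp.
apply/setP => b; rewrite !inE; apply/idP/idP.
- move/eqP => hs.
  have hd : forall i, sgn_of (b i) = 1 \/ sgn_of (b i) = -1.
    by move=> i; rewrite /sgn_of; case: (b i); [right|left].
  case: (@main _ hp _ hd hs) => h; apply/orP; [left|right]; apply/eqP/ffunP => i;
    rewrite ffunE; apply: (@signr_inj int); move: (h i); rewrite /sgn_of => ->.
    by rewrite signr_odd.
  by rewrite signrN signr_odd.
- case/orP => /eqP ->.
    rewrite -[X in X == _]/(\sum_(i < n.+1) sgn_of ([ffun i : 'I_n.+1 => odd i] i) * ('C(n, i))%:Z).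
    apply/eqP; rewrite -[RHS](@alt_sum _ hn); apply: eq_bigr => i _.
    by rewrite ffunE /sgn_of signr_odd.
  apply/eqP; rewrite -[RHS]oppr0 -[in RHS](@alt_sum _ hn) -sumrN; apply: eq_bigr => i _.
  by rewrite ffunE /sgn_of signrN signr_odd mulNr.
Qed.

Theorem theorem6 (p : nat) (hp : prime p) :
  J p.-1 = 2%N /\
  (forall delta : 'I_p -> int,
     (forall i, delta i = 1 \/ delta i = -1) ->
     \sum_(i < p) delta i * ('C(p.-1, i))%:Z = 0 ->
     (forall i : 'I_p, delta i = (-1) ^+ i) \/
     (forall i : 'I_p, delta i = - (-1) ^+ i)).
Proof.
case: p hp => [//|n] hp /=; split; last exact: main.
rewrite /J Jset_eq // cards2.
by case: eqP => // /ffunP /(_ ord0); rewrite !ffunE.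
Qed.
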